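(* Let $N\ge 1$ and let $T:M(N)\to M(N)$ be a non-zero linear map, and let $T^*$ be its adjoint with respect to the Hilbert–Schmidt inner product $\langle A,B\rangle_{\mathrm{HS}}=\operatorname{tr}(A^*B)$. Then $h(T)=h(T^* )$.
   Context: $M(N)$ is the space of $N\times N$ complex matrices. For $1\le p<\infty$, $\|A\|_p$ is the Schatten-$p$ norm $(\sum_i\sigma_i(A)^p)^{1/p}$ and $\|A\|_\infty$ is the operator norm; $\|T\|_{p\to p}=\sup_{X\ne0}\|T(X)\|_p/\|X\|_p$. The height of a non-zero linear map $T:M(N)\to M(N)$ is $h(T)=\sqrt{\|T\|_{1\to1}\|T\|_{\infty\to\infty}}/\|T\|_{2\to2}$. *)

(* Defs.v *)
From HB Require Import structures.
From mathcomp Require Import all_boot all_order all_algebra.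
From mathcomp Require Import complex.
From mathcomp Require Import boolp classical_sets reals.
Set Implicit Arguments. Unset Strict Implicit. Unset Printing Implicit Defensive.
Import Order.TTheory GRing.Theory Num.Theory.
Local Open Scope ring_scope.
Local Open Scope complex_scope.

Section Schatten.
Variables (R : realType) (N : nat).
Local Notation C := R[i].

Definition adjmx (A : 'M[C]_N) : 'M[C]_N := (map_mx Num.conj A)^T.

Definition unitarymx (U : 'M[C]_N) : Prop := U *m adjmx U = 1%:M.

Definition singvals (A : 'M[C]_N) (s : 'rV[R]_N) : Prop :=
  (forall i, 0 <= s 0 i) /\
  exists U V : 'M[C]_N, [/\ unitarymx U, unitarymx V &
     A = U *m diag_mx (map_mx (fun r : R => r%:C) s) *m V].

(* the value of f on the singular values of A (well defined: the multiset
   of singular values is unique, f below are symmetric) *)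
Definition of_singvals (f : 'rV[R]_N -> R) (A : 'M[C]_N) : R :=
  sup [set f s | s in singvals A].

Definition schatten1 (A : 'M[C]_N) : R :=
  of_singvals (fun s => \sum_(i < N) s 0 i) A.
Definition schatten2 (A : 'M[C]_N) : R :=
  of_singvals (fun s => Num.sqrt (\sum_(i < N) s 0 i ^+ 2)) A.
Definition schattenInf (A : 'M[C]_N) : R :=
  of_singvals (fun s => \big[Num.max/0]_(i < N) s 0 i) A.

Definition opnorm (nrm : 'M[C]_N -> R) (T : 'M[C]_N -> 'M[C]_N) : R :=
  sup [set nrm (T X) / nrm X | X in [set X : 'M[C]_N | X != 0]].

Definition height (T : 'M[C]_N -> 'M[C]_N) : R :=
  Num.sqrt (opnorm schatten1 T * opnorm schattenInf T) / opnorm schatten2 T.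

Definition hs (A B : 'M[C]_N) : C := \tr (adjmx A *m B).

Definition hs_adjoint (T Ts : 'M[C]_N -> 'M[C]_N) : Prop :=
  forall A B, hs A (T B) = hs (Ts A) B.

End Schatten.

(* Main.v *)
Require Import Defs.
From HB Require Import structures.
From mathcomp Require Import all_boot all_order all_algebra.
From mathcomp Require Import complex.
From mathcomp Require Import boolp classical_sets reals.
From mathcomp Require Import ring.
Import Order.TTheory GRing.Theory Num.Theory.
Set Implicit Arguments. Unset Strict Implicit.
Local Open Scope ring_scope.
Local Open Scope sesquilinear_scope.
Local Open Scope classical_set_scope.
Local Notation "x %:C" := (real_complex _ x) : ring_scope.

Section Work.
Variable R : realType.
Local Notation C := R[i].
Variable N : nat.
Local Notation M := 'M[C]_N.

Definition Dg (s : 'rV[R]_N) : M := diag_mx (map_mx (fun r : R => r%:C) s).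
Definition sm (s : 'rV[R]_N) : R := \sum_(i < N) s 0 i.
Definition mx (s : 'rV[R]_N) : R := \big[Num.max/0]_(i < N) s 0 i.

Lemma mx_ge0 s : 0 <= mx s.
Proof.
rewrite /mx; elim/big_rec: _ => // i x _ hx.
by rewrite le_max hx orbT.
Qed.

Lemma adjmxE (A : M) i j : adjmx A i j = (A j i)^*.
Proof. by rewrite !mxE. Qed.

Lemma adjmxM (A B : M) : adjmx (A *m B) = adjmx B *m adjmx A.
Proof. by rewrite /adjmx map_mxM trmx_mul. Qed.

Lemma adjmxK (A : M) : adjmx (adjmx A) = A.
Proof. by apply/matrixP => i j; rewrite !adjmxE conjCK. Qed.

Lemma adjmx1 : adjmx (1%:M : M) = 1%:M.
Proof. by apply/matrixP => i j; rewrite !adjmxE !mxE rmorphMn /= conjC1 eq_sym. Qed.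

Lemma adjDg s : adjmx (Dg s) = Dg s.
Proof.
apply/matrixP => i j; rewrite adjmxE !mxE eq_sym.
case: eqP => [->|_]; rewrite ?mulr1n ?mulr0n ?conjC0 //=.
exact: (conjc_real _).
Qed.

Lemma uniL {U : M} : U *m adjmx U = 1%:M -> adjmx U *m U = 1%:M.
Proof. exact: mulmx1C. Qed.

Lemma row_norm1 (Q : M) : Q *m adjmx Q = 1%:M -> forall i, \sum_k `|Q i k| ^+ 2 = 1.
Proof.
move=> H i; have := congr1 (fun X : M => X i i) H; rewrite !mxE eqxx mulr1n => <-.
by apply: eq_bigr => k _; rewrite !mxE normCK.
Qed.

Lemma col_norm1 (P : M) : adjmx P *m P = 1%:M -> forall i, \sum_k `|P k i| ^+ 2 = 1.
Proof.
move=> H i; have := congr1 (fun X : M => X i i) H; rewrite !mxE eqxx mulr1n => <-.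
by apply: eq_bigr => k _; rewrite !mxE normCK mulrC.
Qed.

Lemma amgm_sum (Q P : M) i : Q *m adjmx Q = 1%:M -> adjmx P *m P = 1%:M ->
  \sum_k `|Q i k| * `|P k i| <= 1.
Proof.
move=> hQ hP.
apply: (le_trans (y := \sum_k (`|Q i k| ^+ 2 + `|P k i| ^+ 2) / 2)).
  apply: ler_sum => k _.
  exact: (real_leif_mean_square (normr_real _) (normr_real _)).1.
rewrite -mulr_suml big_split /= row_norm1 // col_norm1 //.
by rewrite -mulr2n divff // pnatr_eq0.
Qed.

Lemma tr_entry (s1 s2 : 'rV[R]_N) (Q P : M) i :
  (Dg s1 *m Q *m Dg s2 *m P) i i
  = \sum_k (s1 0 i)%:C * Q i k * (s2 0 k)%:C * P k i.
Proof.
rewrite mxE; apply: eq_bigr => k _.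
by rewrite /Dg mul_mx_diag mul_diag_mx !mxE.
Qed.

Lemma holder_core (Q P : M) (s1 s2 : 'rV[R]_N) :
  Q *m adjmx Q = 1%:M -> adjmx P *m P = 1%:M ->
  (forall i, 0 <= s1 0 i) -> (forall i, 0 <= s2 0 i) ->
  `|\tr (Dg s1 *m Q *m Dg s2 *m P)| <= (sm s1 * mx s2)%:C.
Proof.
move=> hQ hP h1 h2.
have m_ge k : s2 0 k <= mx s2 by exact: le_bigmax.
rewrite /mxtrace; apply: (le_trans (ler_norm_sum _ _ _)).
rewrite rmorphM rmorph_sum mulr_suml; apply: ler_sum => i _.
rewrite tr_entry; apply: (le_trans (ler_norm_sum _ _ _)).
apply: (le_trans (y := \sum_k (s1 0 i)%:C * (mx s2)%:C * (`|Q i k| * `|P k i|))).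
  apply: ler_sum => k _.
  rewrite !normrM (ger0_norm (x := (s1 0 i)%:C)) ?ler0c //.
  rewrite (ger0_norm (x := (s2 0 k)%:C)) ?ler0c //.
  rewrite -!mulrA; apply: ler_wpM2l; first by rewrite ler0c.
  rewrite [X in _ <= X]mulrCA; apply: ler_wpM2l; first exact: normr_ge0.
  apply: ler_wpM2r; first exact: normr_ge0.
  by rewrite lecR.
rewrite -mulr_sumr; apply: ler_piMr; first by rewrite mulr_ge0 ?ler0c ?mx_ge0.
exact: amgm_sum.
Qed.


Lemma mul_uni (A B : M) : A *m adjmx A = 1%:M -> B *m adjmx B = 1%:M ->
  (A *m B) *m adjmx (A *m B) = 1%:M.
Proof. by move=> hA hB; rewrite adjmxM mulmxA -(mulmxA A) hB mulmx1 hA. Qed.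

Lemma adj_uni (A : M) : A *m adjmx A = 1%:M -> adjmx A *m adjmx (adjmx A) = 1%:M.
Proof. by move=> hA; rewrite adjmxK uniL. Qed.

Lemma hs_svd (Y Z : M) sY sZ : singvals Y sY -> singvals Z sZ ->
  exists Q P : M, [/\ Q *m adjmx Q = 1%:M, P *m adjmx P = 1%:M &
     hs Y Z = \tr (Dg sY *m Q *m Dg sZ *m P)].
Proof.
case=> _ [U1 [V1 [u1 v1 ->]]] [_ [U2 [V2 [u2 v2 ->]]]].
exists (adjmx U1 *m U2), (V2 *m adjmx V1); split.
- by apply: mul_uni => //; apply: adj_uni.
- by apply: mul_uni => //; apply: adj_uni.
rewrite /hs !adjmxM.
have -> : diag_mx (map_mx (fun r : R => r%:C) sY) = Dg sY by [].
have -> : diag_mx (map_mx (fun r : R => r%:C) sZ) = Dg sZ by [].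
by rewrite adjDg -!mulmxA mxtrace_mulC !mulmxA.
Qed.

Lemma holder1 (Y Z : M) sY sZ : singvals Y sY -> singvals Z sZ ->
  `|hs Y Z| <= (sm sY * mx sZ)%:C.
Proof.
move=> hY hZ; have [Q [P [hQ hP ->]]] := hs_svd hY hZ.
by apply: holder_core => //; [exact: uniL | case: hY | case: hZ].
Qed.

Lemma holder2 (Y Z : M) sY sZ : singvals Y sY -> singvals Z sZ ->
  `|hs Y Z| <= (mx sY * sm sZ)%:C.
Proof.
move=> hY hZ; have [Q [P [hQ hP ->]]] := hs_svd hY hZ.
rewrite -(mulmxA (Dg sY *m Q)) mxtrace_mulC !mulmxA mulrC.
by apply: holder_core => //; [exact: uniL | case: hZ | case: hY].
Qed.


Lemma sv_ge0 (A : M) (s : 'rV[R]_N) : singvals A s -> forall i, 0 <= s 0 i.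
Proof. by case. Qed.

Lemma sm_ge0 (s : 'rV[R]_N) : (forall i, 0 <= s 0 i) -> 0 <= sm s.
Proof. by move=> h; rewrite /sm sumr_ge0. Qed.

Lemma trDg (s : 'rV[R]_N) : \tr (Dg s) = (sm s)%:C.
Proof. by rewrite /Dg mxtrace_diag /sm rmorph_sum; apply: eq_bigr => i _; rewrite mxE. Qed.

Definition ones : 'rV[R]_N := const_mx 1.

Lemma Dg_ones : Dg ones = 1%:M.
Proof. by apply/matrixP => i j; rewrite !mxE. Qed.

Lemma mx_ones : mx ones <= 1.
Proof. by rewrite /mx; apply: bigmax_le => // i _; rewrite mxE. Qed.

Lemma attain1 (A : M) (s : 'rV[R]_N) : singvals A s ->
  exists W, singvals W ones /\ hs W A = (sm s)%:C.
Proof.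
case=> hs0 [U [V [u v eA]]].
exists (U *m V); split.
  split; first by move=> i; rewrite mxE.
  by exists U, V; split => //; rewrite -/(Dg ones) Dg_ones mulmx1.
rewrite /hs eA adjmxM !mulmxA -(mulmxA (adjmx V)) (uniL u) mulmx1.
by rewrite -/(Dg s) mxtrace_mulC mulmxA v mul1mx trDg.
Qed.

Definition delta (i0 : 'I_N) : 'rV[R]_N := \row_j ((j == i0)%:R).

Lemma sm_delta i0 : sm (delta i0) = 1.
Proof.
rewrite /sm (bigD1 i0) //= big1 ?addr0 ?mxE ?eqxx //.
by move=> j /negPf hj; rewrite mxE hj.
Qed.

Lemma attainInf (A : M) (s : 'rV[R]_N) i0 : singvals A s -> s 0 i0 = mx s ->
  exists E, singvals E (delta i0) /\ hs E A = (mx s)%:C.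
Proof.
case=> hs0 [U [V [u v eA]]] hi0.
exists (U *m Dg (delta i0) *m V); split.
  split; first by move=> i; rewrite mxE; case: (i == i0).
  by exists U, V.
rewrite /hs eA !adjmxM adjDg !mulmxA -(mulmxA _ (adjmx U)) (uniL u) mulmx1.
rewrite -!mulmxA mxtrace_mulC !mulmxA. rewrite -(mulmxA _ V) v mulmx1.
rewrite /mxtrace (bigD1 i0) //= big1 ?addr0.
  by rewrite /Dg mul_diag_mx !mxE eqxx /= mulr1n mul1r hi0.
move=> j /negPf hj; rewrite /Dg mul_diag_mx !mxE hj /=.
by rewrite mul0r.
Qed.

Lemma sv_norm2 (A : M) (s : 'rV[R]_N) : singvals A s -> hs A A = (\sum_i s 0 i ^+ 2)%:C.
Proof.
case=> hs0 [U [V [u v eA]]].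
rewrite /hs eA !adjmxM adjDg !mulmxA -(mulmxA _ (adjmx U)) (uniL u) mulmx1.
rewrite -!mulmxA mxtrace_mulC !mulmxA -(mulmxA _ V) v mulmx1.
rewrite /mxtrace rmorph_sum; apply: eq_bigr => i _.
by rewrite /Dg mul_diag_mx !mxE eqxx /= !mulr1n rmorphXn expr2.
Qed.


Lemma uniq_sm (A : M) s t : singvals A s -> singvals A t -> sm s <= sm t.
Proof.
move=> hs ht; have [W [hW e]] := attain1 hs.
have := holder2 hW ht; rewrite e ger0_norm ?ler0c ?sm_ge0 //; last exact: sv_ge0 hs.
move=> h; rewrite -lecR (le_trans h) // lecR.
by apply: ler_piMl; [apply: sm_ge0; exact: sv_ge0 ht | exact: mx_ones].
Qed.

Lemma argmax (s : 'rV[R]_N) (j : 'I_N) : (forall i, 0 <= s 0 i) ->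
  exists i0, s 0 i0 = mx s.
Proof.
move=> h; have [i0 _ e] := @eq_bigmax _ _ _ 0 j xpredT (fun i => s 0 i) isT (fun i _ => h i).
by exists i0; rewrite /mx e.
Qed.

Lemma uniq_mx (A : M) s t (j : 'I_N) : singvals A s -> singvals A t -> mx s <= mx t.
Proof.
move=> hs ht; have [i0 hi0] := argmax j (sv_ge0 hs).
have [E [hE e]] := attainInf hs hi0.
have := holder1 hE ht; rewrite e ger0_norm ?ler0c ?mx_ge0 //.
by rewrite sm_delta mul1r lecR.
Qed.

Lemma of_sv (f : 'rV[R]_N -> R) (A : M) s : singvals A s ->
  (forall t, singvals A t -> f t = f s) -> of_singvals f A = f s.
Proof.
move=> hs hf; rewrite /of_singvals.
have -> : [set f t | t in singvals A]%classic = [set f s]%classic.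
  apply/seteqP; split => x /=.
    by case=> t ht <-; apply: hf.
  by move=> ->; exists s.
exact: sup1.
Qed.

Lemma adjE (A : M) : adjmx A = A ^t*.
Proof. by rewrite /adjmx map_trmx. Qed.

Lemma herm_spec (H : M) : adjmx H = H -> exists (Q : M) (e : 'rV[C]_N),
  Q *m adjmx Q = 1%:M /\ Q *m H *m adjmx Q = diag_mx e.
Proof.
move=> hH.
have nH : H \is normalmx by apply/normalmxP; rewrite -adjE hH.
move/orthomx_spectralP: nH.
set P := spectralmx H; set d := spectral_diag H => eH.
have uP : P *m adjmx P = 1%:M.
  by rewrite adjE; apply/unitarymxP; exact: spectral_unitarymx.
exists P, d; split => //.
rewrite eH invmx_unitary ?spectral_unitarymx // -adjE.
by rewrite !mulmxA uP mul1mx -mulmxA uP mulmx1.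
Qed.

Lemma adjmxB (A B : M) : adjmx (A - B) = adjmx A - adjmx B.
Proof. by apply/matrixP => i j; rewrite !mxE rmorphB. Qed.









Lemma sumsq0 (I : finType) (F : I -> C) :
  \sum_i (F i)^* * F i = 0 -> forall i, F i = 0.
Proof.
move=> h i.
have h2 : (F i)^* * F i = 0.
  apply: (@psumr_eq0P _ _ xpredT (fun i => (F i)^* * F i)) => // j _.
  by rewrite mulrC mul_conjC_ge0.
by move/eqP: h2; rewrite -normCKC sqrf_eq0 normr_eq0 => /eqP.
Qed.

Section Completion.
Variables (G : M) (b : 'I_N -> bool).
Hypothesis hG : adjmx G *m G = diag_mx (\row_i ((b i)%:R : C)).

Lemma c0 i : ~~ b i -> forall k, G k i = 0.
Proof.
move=> nb; apply: sumsq0.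
have e : \sum_k (G k i)^* * G k i = (adjmx G *m G) i i.
  by rewrite mxE; apply: eq_bigr => k _; rewrite !mxE.
by rewrite e hG !mxE eqxx mulr1n (negPf nb).
Qed.

Lemma c1 : G *m diag_mx (\row_i ((b i)%:R : C)) = G.
Proof.
apply/matrixP => k i; rewrite mul_mx_diag !mxE.
by case: (boolP (b i)) => hb; rewrite ?mulr1 // c0 // mul0r.
Qed.

Let GG := G *m adjmx G.

Lemma GG_herm : adjmx GG = GG.
Proof. by rewrite /GG adjmxM adjmxK. Qed.

Lemma GG_idem : GG *m GG = GG.
Proof. by rewrite /GG mulmxA -(mulmxA G) hG c1. Qed.

Lemma trGG : \tr GG = \sum_i ((b i)%:R : C).
Proof.
rewrite /GG mxtrace_mulC hG mxtrace_diag.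
by apply: eq_bigr => i _; rewrite mxE.
Qed.


Lemma H2_herm : adjmx (1%:M - GG) = 1%:M - GG.
Proof. by rewrite adjmxB adjmx1 GG_herm. Qed.

Lemma sum_boolr (I : finType) (P : pred I) : \sum_i ((P i)%:R : C) = (#|P|)%:R.
Proof.
rewrite -natr_sum; congr (_%:R); rewrite -sum1_card [RHS]big_mkcond /=.
by apply: eq_bigr => i _; rewrite unfold_in; case: (P i).
Qed.

Lemma completion : exists U : M, (U *m adjmx U = 1%:M) /\ (forall i, b i -> forall k, U k i = G k i).
Proof.
have [Q [e [uQ hQ]]] := herm_spec H2_herm.
pose F := Q *m GG *m adjmx Q.
have eF : F = diag_mx (\row_j (1 - e 0 j)).
  have : Q *m (1%:M - GG) *m adjmx Q = 1%:M - F.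
    by rewrite mulmxBr mulmxBl mulmx1 uQ.
  rewrite hQ => h.
  have -> : F = 1%:M - diag_mx e by rewrite h opprB addrC subrK.
  apply/matrixP => i j; rewrite !mxE.
  by case: eqP => _; rewrite ?mulr1n ?mulr0n ?subr0.
pose c j := 1 - e 0 j.
have eFF : F *m F = F.
  have -> : F *m F = Q *m (GG *m (adjmx Q *m Q) *m GG) *m adjmx Q.
    by rewrite /F !mulmxA.
  by rewrite (uniL uQ) mulmx1 GG_idem.
have c01 j : (c j == 0) || (c j == 1).
  have := congr1 (fun X : M => X j j) eFF.
  rewrite eF mul_diag_mx !mxE eqxx mulr1n => h.
  have : c j * (c j - 1) = 0 by rewrite mulrBr mulr1 h subrr.
  move/eqP; rewrite mulf_eq0 => /orP [->//|h1]; apply/orP; right; by rewrite -subr_eq0.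
have QG0 j : c j = 0 -> forall i, (Q *m G) j i = 0.
  move=> hc; apply: sumsq0.
  have : F j j = 0 by rewrite eF !mxE eqxx mulr1n.
  have -> : F = (Q *m G) *m adjmx (Q *m G) by rewrite /F /GG adjmxM !mulmxA.
  rewrite mxE => h0; rewrite -[X in _ = X]h0; apply: eq_bigr => i _; by rewrite !mxE mulrC.
have card1 : #|[pred j | c j != 0]| = #|[pred i | b i]|.
  apply/eqP; rewrite -(eqr_nat C) -!sum_boolr; apply/eqP.
  have -> : \sum_i ((b i)%:R : C) = \tr F.
    by rewrite -trGG /F [RHS]mxtrace_mulC mulmxA (uniL uQ) mul1mx.
  rewrite eF mxtrace_diag; apply: eq_bigr => j _; rewrite mxE /=.
  by rewrite -/(c j); case/orP: (c01 j) => /eqP ->; rewrite ?eqxx ?oner_eq0.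
pose Z := [pred i | ~~ b i].
pose E := [pred j | c j == 0].
have cardZE : #|Z| = #|E|.
  have h1 : addn #|[pred j | c j != 0]| #|E| = #|'I_N|.
    rewrite -(cardC [pred j | c j != 0]); congr addn.
    by apply: eq_card => j; rewrite !inE negbK.
  have h2 : addn #|[pred i | b i]| #|Z| = #|'I_N|.
    by rewrite -(cardC [pred i | b i]).
  by apply/eqP; rewrite -(eqn_add2l #|[pred i | b i]|) h2 -card1 h1.
pose f i := nth i (enum E) (index i (enum Z)).
have hsz : size (enum Z) = size (enum E) by rewrite -!cardE.
have iZ i : ~~ b i -> i \in enum Z by move=> hb; rewrite mem_enum inE.
have fE i : ~~ b i -> c (f i) = 0.
  move=> hb; have : f i \in enum E.
    by apply: mem_nth; rewrite -hsz index_mem iZ.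
  by rewrite mem_enum inE => /eqP.
have finj i i' : ~~ b i -> ~~ b i' -> (f i == f i') = (i == i').
  move=> hb hb'; rewrite /f /= [X in _ == X](set_nth_default i); last by rewrite -hsz index_mem iZ.
  rewrite nth_uniq ?enum_uniq // -?hsz ?index_mem ?iZ //.
  apply/eqP/eqP => [h|->] //.
  by rewrite -(nth_index i (iZ _ hb)) h nth_index // iZ.
pose U := \matrix_(k, i) if b i then G k i else adjmx Q k (f i).
exists U; split; last by move=> i hb k; rewrite mxE hb.
apply: mulmx1C; apply/matrixP => i i'; rewrite [LHS]mxE [RHS]mxE.
case: (boolP (b i)) => hb; case: (boolP (b i')) => hb'.
- have -> : \sum_k adjmx U i k * U k i' = (adjmx G *m G) i i'.
    by rewrite mxE; apply: eq_bigr => k _; rewrite !mxE hb hb'.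
  by rewrite hG !mxE hb.
- have ne : (i == i') = false by apply/negP => /eqP ee; move: hb'; rewrite -ee hb.
  rewrite ne mulr0n.
  have -> : \sum_k adjmx U i k * U k i' = ((Q *m G) (f i') i)^*.
    rewrite mxE rmorph_sum; apply: eq_bigr => k _; rewrite !mxE hb (negPf hb') /=.
    by rewrite rmorphM mulrC.
  by rewrite QG0 ?fE // conjC0.
- have ne : (i == i') = false by apply/negP => /eqP ee; move: hb; rewrite ee hb'.
  rewrite ne mulr0n.
  have -> : \sum_k adjmx U i k * U k i' = (Q *m G) (f i) i'.
    rewrite mxE; apply: eq_bigr => k _; rewrite !mxE hb' (negPf hb) /=.
    by rewrite conjCK.
  by rewrite QG0 ?fE.
- have -> : \sum_k adjmx U i k * U k i' = (Q *m adjmx Q) (f i) (f i').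
    rewrite mxE; apply: eq_bigr => k _; rewrite !mxE (negPf hb') (negPf hb) /=.
    by rewrite conjCK.
  by rewrite uQ !mxE finj.
Qed.

End Completion.


Lemma svd_exists (A : M) : exists s, singvals A s.
Proof.
have hH : adjmx (adjmx A *m A) = adjmx A *m A by rewrite adjmxM adjmxK.
have [P [d [uP hP]]] := herm_spec hH.
pose B := A *m adjmx P.
have hB : adjmx B *m B = diag_mx d.
  by rewrite /B adjmxM adjmxK -hP !mulmxA.
have eB : B = A *m adjmx P by [].
clearbody B.
have dE i : d 0 i = \sum_k (B k i)^* * B k i.
  have := congr1 (fun X : M => X i i) hB; rewrite !mxE eqxx mulr1n => <-.
  by apply: eq_bigr => k _; rewrite !mxE.
have d_ge0 i : 0 <= d 0 i.
  by rewrite dE sumr_ge0 // => k _; rewrite mulrC mul_conjC_ge0.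
have [s [s_ge0 s2]] : exists s : 'rV[R]_N,
    (forall i, 0 <= s 0 i) /\ (forall i, (s 0 i)%:C ^+ 2 = d 0 i).
  exists (\row_i Num.sqrt (complex.Re (d 0 i))); split => i; rewrite mxE ?sqrtr_ge0 //.
  have dR : (complex.Re (d 0 i))%:C = d 0 i by apply: RRe_real; exact: ger0_real.
  have hRe : 0 <= complex.Re (d 0 i) by rewrite -ler0c dR.
  by rewrite -rmorphXn /= sqr_sqrtr.
pose b i := s 0 i != 0.
pose G := B *m Dg (\row_i (s 0 i)^-1).
have hG : adjmx G *m G = diag_mx (\row_i ((b i)%:R : C)).
  rewrite /G adjmxM adjDg -mulmxA (mulmxA (adjmx B)) hB.
  apply/matrixP => i j; rewrite /Dg mul_diag_mx mul_mx_diag !mxE.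
  case: eqP => [->|_]; last by rewrite !mulr0n mul0r mulr0.
  rewrite !mulr1n -(s2 j) -!rmorphXn -!rmorphM /= /b.
  have [->|/eqP hs] := eqP; first by rewrite invr0 !mul0r.
  have -> : (s 0 j)^-1 * (s 0 j ^+ 2 / s 0 j) = 1.
    by rewrite expr2 mulfK // mulVf.
  by [].
have [U [uU hU]] := completion hG.
have eUB : U *m Dg s = B.
  apply/matrixP => k i; rewrite /Dg mul_mx_diag !mxE.
  case: (boolP (b i)) => hb.
    rewrite hU // /G /Dg mul_mx_diag !mxE -mulrA -rmorphM /=.
    by rewrite mulVf // rmorph1 mulr1.
  have hs : s 0 i = 0 by move: hb; rewrite /b /= negbK => /eqP.
  rewrite hs mulr0; symmetry; apply: (@sumsq0 _ (fun k => B k i)).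
  by rewrite -dE -s2 hs expr2 mulr0.
exists s; split => //; exists U, P; split => //.
by rewrite -[diag_mx _]/(Dg s) eUB eB -mulmxA (uniL uP) mulmx1.
Qed.


Lemma sm_eq (A : M) s t : singvals A s -> singvals A t -> sm t = sm s.
Proof. by move=> hs ht; apply/eqP; rewrite eq_le !(uniq_sm hs ht, uniq_sm ht hs). Qed.

Lemma s1E (A : M) s : singvals A s -> schatten1 A = sm s.
Proof. by move=> hs; apply: (of_sv (f := sm) hs) => t ht; exact: sm_eq hs ht. Qed.

Lemma s2E (A : M) s : singvals A s -> schatten2 A = Num.sqrt (\sum_i s 0 i ^+ 2).
Proof.
move=> hs; apply: (of_sv (f := fun s => Num.sqrt (\sum_i s 0 i ^+ 2)) hs) => t ht.
by congr Num.sqrt; apply: complexI; rewrite -(sv_norm2 hs) -(sv_norm2 ht).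
Qed.

Lemma s1_ge0 (A : M) : 0 <= schatten1 A.
Proof. by have [sA Hs] := svd_exists A; rewrite (s1E Hs); apply: sm_ge0; exact: sv_ge0 Hs. Qed.

Lemma s2_ge0 (A : M) : 0 <= schatten2 A.
Proof. by have [sA Hs] := svd_exists A; rewrite (s2E Hs) sqrtr_ge0. Qed.

Lemma hs2 (A : M) : hs A A = (schatten2 A ^+ 2)%:C.
Proof.
have [sA Hs] := svd_exists A; rewrite (s2E Hs) sqr_sqrtr ?(sv_norm2 Hs) //.
by apply: sumr_ge0 => i _; apply: exprn_ge0; exact: (sv_ge0 Hs i).
Qed.

Lemma sv0 : singvals (0 : M) 0.
Proof.
split; first by move=> i; rewrite mxE.
exists 1%:M, 1%:M; split; rewrite /Defs.unitarymx ?adjmx1 ?mulmx1 //.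
have -> : diag_mx (map_mx (fun r : R => r%:C) (0 : 'rV[R]_N)) = 0.
  by apply/matrixP => i j; rewrite !mxE rmorph0 mul0rn.
by rewrite mulmx0.
Qed.

Lemma s1_0 : schatten1 (0 : M) = 0.
Proof. by rewrite (s1E sv0) /sm big1 // => i _; rewrite mxE. Qed.

Lemma s2_0 : schatten2 (0 : M) = 0.
Proof. by rewrite (s2E sv0) big1 ?sqrtr0 // => i _; rewrite mxE expr0n. Qed.

Section PosN.
Hypothesis hN : (0 < N)%N.
Let j0 : 'I_N := Ordinal hN.

Lemma sInfE (A : M) s : singvals A s -> schattenInf A = mx s.
Proof.
move=> hs; apply: (of_sv (f := mx) hs) => t ht.
by apply/eqP; rewrite eq_le (uniq_mx j0 hs ht) (uniq_mx j0 ht hs).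
Qed.

Lemma sInf_ge0 (A : M) : 0 <= schattenInf A.
Proof. by have [sA Hs] := svd_exists A; rewrite (sInfE Hs) mx_ge0. Qed.

Lemma sInf_0 : schattenInf (0 : M) = 0.
Proof. by rewrite (sInfE sv0) /mx; elim/big_rec: _ => // i x _ ->; rewrite mxE maxxx. Qed.

Lemma holderIn1 (Y Z : M) : `|hs Y Z| <= (schattenInf Y * schatten1 Z)%:C.
Proof.
have [sA Hs] := svd_exists Y; have [t ht] := svd_exists Z.
by rewrite (sInfE Hs) (s1E ht); apply: holder2.
Qed.

Lemma holder1In (Y Z : M) : `|hs Y Z| <= (schatten1 Y * schattenInf Z)%:C.
Proof.
have [sA Hs] := svd_exists Y; have [t ht] := svd_exists Z.
by rewrite (sInfE ht) (s1E Hs); apply: holder1.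
Qed.

Lemma attain1N (Z : M) : exists W, schattenInf W <= 1 /\ hs W Z = (schatten1 Z)%:C.
Proof.
have [sA Hs] := svd_exists Z; have [W [hW e]] := attain1 Hs.
by exists W; rewrite (sInfE hW) (s1E Hs); split => //; exact: mx_ones.
Qed.

Lemma attainInfN (Z : M) : exists E, schatten1 E <= 1 /\ hs E Z = (schattenInf Z)%:C.
Proof.
have [sA Hs] := svd_exists Z; have [i0 hi0] := argmax j0 (sv_ge0 Hs).
have [E [hE e]] := attainInf Hs hi0.
by exists E; rewrite (s1E hE) (sInfE Hs) sm_delta; split.
Qed.

Lemma pos_of_nz (A : M) : A != 0 -> exists2 s, singvals A s & exists i, 0 < s 0 i.
Proof.
move=> nz; have [sA Hs] := svd_exists A; exists sA => //.
apply/not_existsP => hn; move/negP: nz; apply; apply/eqP.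
case: Hs => h0 [U [V [u v ->]]].
have -> : diag_mx (map_mx (fun r : R => r%:C) sA) = 0.
  apply/matrixP => i j; rewrite !mxE.
  have : sA 0 i = 0 by apply/eqP; rewrite eq_le h0 andbT leNgt; apply/negP => hp; apply: (hn i).
  by move=> ->; rewrite rmorph0 mul0rn.
by rewrite mulmx0 mul0mx.
Qed.

Lemma s1_gt0 (A : M) : A != 0 -> 0 < schatten1 A.
Proof.
move=> /pos_of_nz [sA Hs [i hi]]; rewrite (s1E Hs) /sm (bigD1 i) //=.
by rewrite ltr_wpDr // sumr_ge0 // => k _; exact: (sv_ge0 Hs k).
Qed.

Lemma sInf_gt0 (A : M) : A != 0 -> 0 < schattenInf A.
Proof. by move=> /pos_of_nz [sA Hs [i hi]]; rewrite (sInfE Hs) (lt_le_trans hi) // le_bigmax. Qed.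

Lemma s2_gt0 (A : M) : A != 0 -> 0 < schatten2 A.
Proof.
move=> /pos_of_nz [sA Hs [i hi]]; rewrite (s2E Hs) sqrtr_gt0 (bigD1 i) //=.
by rewrite ltr_wpDr ?exprn_gt0 // sumr_ge0 // => k _; rewrite exprn_ge0 //; exact: (sv_ge0 Hs k).
Qed.

End PosN.


Lemma hsE (A B : M) : hs A B = \sum_i \sum_j (A j i)^* * B j i.
Proof.
rewrite /hs /mxtrace; apply: eq_bigr => i _; rewrite mxE.
by apply: eq_bigr => j _; rewrite !mxE.
Qed.

Lemma hsC (A B : M) : hs B A = (hs A B)^*.
Proof.
rewrite !hsE rmorph_sum; apply: eq_bigr => i _; rewrite rmorph_sum.
by apply: eq_bigr => j _; rewrite rmorphM /= conjCK mulrC.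
Qed.

Lemma cs_sum (I : finType) (x y : I -> C) (a b : C) :
  (forall i, 0 <= x i) -> (forall i, 0 <= y i) -> 0 <= a -> 0 <= b ->
  \sum_i x i ^+ 2 = a ^+ 2 -> \sum_i y i ^+ 2 = b ^+ 2 ->
  \sum_i x i * y i <= a * b.
Proof.
move=> hx hy ha hb ex ey.
have [a0|an0] := eqVneq a 0.
  have x0 i : x i = 0.
    apply/eqP; rewrite -sqrf_eq0; apply/eqP.
    apply: (@psumr_eq0P _ _ xpredT (fun i => x i ^+ 2)) => //.
      by move=> k _; rewrite exprn_ge0.
    by rewrite ex a0 expr0n.
  by rewrite a0 mul0r big1 // => i _; rewrite x0 mul0r.
have [b0|bn0] := eqVneq b 0.
  have y0 i : y i = 0.
    apply/eqP; rewrite -sqrf_eq0; apply/eqP.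
    apply: (@psumr_eq0P _ _ xpredT (fun i => y i ^+ 2)) => //.
      by move=> k _; rewrite exprn_ge0.
    by rewrite ey b0 expr0n.
  by rewrite b0 mulr0 big1 // => i _; rewrite y0 mulr0.
have hab : 0 < a * b by rewrite mulr_gt0 // lt0r ?an0 ?bn0.
rewrite -(ler_pM2l hab).
apply: (le_trans (y := \sum_i ((x i * b) ^+ 2 + (y i * a) ^+ 2) / 2)).
  rewrite mulr_sumr; apply: ler_sum => i _.
  have -> : a * b * (x i * y i) = (x i * b) * (y i * a) by ring.
  apply: (real_leif_mean_square _ _).1; apply: realM; apply: ger0_real => //.
have -> : \sum_i ((x i * b) ^+ 2 + (y i * a) ^+ 2) / 2
    = ((\sum_i x i ^+ 2) * b ^+ 2 + (\sum_i y i ^+ 2) * a ^+ 2) / 2.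
  rewrite -mulr_suml big_split /= !mulr_suml.
  by congr (_ / _); congr (_ + _); apply: eq_bigr => i _; rewrite exprMn.
rewrite ex ey le_eqVlt; apply/orP; left; apply/eqP; by field.
Qed.

Lemma cs_hs (A B : M) : `|hs A B| <= (schatten2 A * schatten2 B)%:C.
Proof.
rewrite hsE; apply: (le_trans (ler_norm_sum _ _ _)).
apply: (le_trans (y := \sum_i \sum_j `|A j i| * `|B j i|)).
  apply: ler_sum => i _; apply: (le_trans (ler_norm_sum _ _ _)).
  by apply: ler_sum => j _; rewrite normrM norm_conjC.
rewrite pair_bigA /= rmorphM.
apply: cs_sum => //; rewrite ?normr_ge0 ?ler0c ?s2_ge0 //.
  by rewrite -rmorphXn /= -hs2 hsE pair_bigA /=; apply: eq_bigr => p _; rewrite normCKC.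
by rewrite -rmorphXn /= -hs2 hsE pair_bigA /=; apply: eq_bigr => p _; rewrite normCKC.
Qed.


Lemma sup_eq_ub (S1 S2 : set R) : S1 !=set0 -> S2 !=set0 ->
  (forall m, ubound S1 m -> ubound S2 m) -> (forall m, ubound S2 m -> ubound S1 m) ->
  sup S1 = sup S2.
Proof.
move=> n1 n2 h12 h21.
case: (pselect (has_ubound S1)) => [[m hm]|nb].
  have b2 : has_ubound S2 by exists m; exact: h12.
  have b1 : has_ubound S1 by exists m.
  apply/eqP; rewrite eq_le; apply/andP; split.
    by apply: ge_sup n1 _; apply: h21; exact: ub_le_sup b2.
  by apply: ge_sup n2 _; apply: h12; exact: ub_le_sup b1.
have nb2 : ~ has_ubound S2 by case=> m hm; apply: nb; exists m; exact: h21.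
by rewrite !sup_out // => -[].
Qed.

Lemma ub_iff (nrm : M -> R) (T : M -> M) m : (forall X, X != 0 -> 0 < nrm X) ->
  ubound [set nrm (T X) / nrm X | X in [set X : M | X != 0]] m <->
  (forall X, X != 0 -> nrm (T X) <= m * nrm X).
Proof.
move=> pos; split.
  by move=> h X nz; rewrite -ler_pdivrMr ?pos //; apply: h; exists X.
by move=> h _ [X nz <-]; rewrite ler_pdivrMr ?pos //; exact: h.
Qed.

Section Main.
Hypothesis hN : (0 < N)%N.

Lemma one_nz : (1%:M : M) != 0.
Proof.
apply/eqP => /matrixP/(_ (Ordinal hN) (Ordinal hN)); rewrite !mxE eqxx mulr1n.
by move/eqP; rewrite oner_eq0.
Qed.

Lemma ne_set (nrm : M -> R) (T : M -> M) :
  [set nrm (T X) / nrm X | X in [set X : M | X != 0]] !=set0.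
Proof. by exists (nrm (T 1%:M) / nrm 1%:M); exists 1%:M => //; exact: one_nz. Qed.

Variables (T Ts : M -> M).
Hypotheses (T0 : T 0 = 0) (Ts0 : Ts 0 = 0).
Hypothesis adj : forall A B, hs A (T B) = hs (Ts A) B.
Hypothesis adj' : forall A B, hs A (Ts B) = hs (T A) B.

Lemma G1 : opnorm (@schatten1 R N) Ts = opnorm (@schattenInf R N) T.
Proof.
rewrite /opnorm; apply: sup_eq_ub; try exact: ne_set.
- move=> m /(@ub_iff _ _ _ (@s1_gt0)) h; apply/(@ub_iff _ _ _ (sInf_gt0 hN)).
  have hm : 0 <= m.
    rewrite -(pmulr_lge0 _ (s1_gt0 one_nz)).
    exact: le_trans (s1_ge0 _) (h _ one_nz).
  have h' Y : schatten1 (Ts Y) <= m * schatten1 Y.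
    by have [->|nz] := eqVneq Y 0; [rewrite Ts0 s1_0 mulr0 | exact: h].
  move=> X nz; have [E [hE e]] := attainInfN hN (T X).
  have : (schattenInf (T X))%:C <= (schatten1 (Ts E) * schattenInf X)%:C.
    rewrite -(ger0_norm (x := (schattenInf (T X))%:C)) ?ler0c ?sInf_ge0 //.
    by rewrite -e adj; exact: holder1In.
  rewrite lecR => h1; apply: (le_trans h1); apply: ler_wpM2r; first exact: sInf_ge0.
  by apply: (le_trans (h' E)); apply: ler_piMr.
- move=> m /(@ub_iff _ _ _ (sInf_gt0 hN)) h; apply/(@ub_iff _ _ _ (@s1_gt0)).
  have hm : 0 <= m.
    rewrite -(pmulr_lge0 _ (sInf_gt0 hN one_nz)).
    exact: le_trans (sInf_ge0 hN _) (h _ one_nz).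
  have h' X : schattenInf (T X) <= m * schattenInf X.
    by have [->|nz] := eqVneq X 0; [rewrite T0 (sInf_0 hN) mulr0 | exact: h].
  move=> Y nz; have [W [hW e]] := attain1N hN (Ts Y).
  have : (schatten1 (Ts Y))%:C <= (schattenInf (T W) * schatten1 Y)%:C.
    rewrite -(ger0_norm (x := (schatten1 (Ts Y))%:C)) ?ler0c ?s1_ge0 //.
    by rewrite -e adj'; exact: holderIn1.
  rewrite lecR => h1; apply: (le_trans h1); apply: ler_wpM2r; first exact: s1_ge0.
  by apply: (le_trans (h' W)); apply: ler_piMr.
Qed.

End Main.

Lemma G2dir (T Ts : M -> M) m : (0 < N)%N -> T 0 = 0 ->
  (forall A B, hs A (Ts B) = hs (T A) B) ->
  (forall X, X != 0 -> schatten2 (T X) <= m * schatten2 X) ->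
  (forall Y, Y != 0 -> schatten2 (Ts Y) <= m * schatten2 Y).
Proof.
move=> hN T0 adj' h Y nz.
have hm : 0 <= m.
  rewrite -(pmulr_lge0 _ (s2_gt0 (one_nz hN))).
  exact: le_trans (s2_ge0 _) (h _ (one_nz hN)).
have h' X : schatten2 (T X) <= m * schatten2 X.
  by have [->|nzX] := eqVneq X 0; [rewrite T0 s2_0 mulr0 | exact: h].
have key : schatten2 (Ts Y) ^+ 2 <= m * schatten2 (Ts Y) * schatten2 Y.
  have e := hs2 (Ts Y); rewrite adj' in e.
  have : ((schatten2 (Ts Y)) ^+ 2)%:C <= (schatten2 (T (Ts Y)) * schatten2 Y)%:C.
    rewrite -(ger0_norm (x := ((schatten2 (Ts Y)) ^+ 2)%:C)) ?ler0c ?exprn_ge0 ?s2_ge0 //.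
    by rewrite -e; exact: cs_hs.
  rewrite lecR => h1; apply: (le_trans h1); apply: ler_wpM2r; first exact: s2_ge0.
  exact: h'.
have [z|pz] := eqVneq (schatten2 (Ts Y)) 0.
  by rewrite z mulr_ge0 ?s2_ge0.
have hp : 0 < schatten2 (Ts Y) by rewrite lt0r pz s2_ge0.
by rewrite -(ler_pM2r hp) -expr2 (le_trans key) // mulrAC.
Qed.

Lemma G2 (T Ts : M -> M) : (0 < N)%N -> T 0 = 0 -> Ts 0 = 0 ->
  (forall A B, hs A (T B) = hs (Ts A) B) ->
  (forall A B, hs A (Ts B) = hs (T A) B) ->
  opnorm (@schatten2 R N) Ts = opnorm (@schatten2 R N) T.
Proof.
move=> hN T0 Ts0 adj adj'.
rewrite /opnorm; apply: sup_eq_ub; try exact: ne_set.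
- move=> m /(@ub_iff _ _ _ (@s2_gt0)) h; apply/(@ub_iff _ _ _ (@s2_gt0)).
  exact: (G2dir hN Ts0 adj h).
- move=> m /(@ub_iff _ _ _ (@s2_gt0)) h; apply/(@ub_iff _ _ _ (@s2_gt0)).
  exact: (G2dir hN T0 adj' h).
Qed.

End Work.

Unset Implicit Arguments.

Theorem proposition4p2 (R : realType) (N : nat) (hN : (1 <= N)%N)
    (T Ts : {linear 'M[R[i]]_N -> 'M[R[i]]_N})
    (hT : exists X : 'M[R[i]]_N, T X != 0)
    (hTs : hs_adjoint T Ts) :
  height T = height Ts.
Proof.
have adj' : forall A B, hs A (Ts B) = hs (T A) B.
  by move=> A B; rewrite (hsC (Ts B) A) -hTs -(hsC B (T A)).
have T0 : T 0 = 0 := linear0 T.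
have Ts0 : Ts 0 = 0 := linear0 Ts.
rewrite /height (G1 hN T0 Ts0 hTs adj') -(G1 hN Ts0 T0 adj' hTs).
by rewrite (G2 hN T0 Ts0 hTs adj') [X in Num.sqrt X]mulrC.
Qed.
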